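(* Let $\alpha\ge 0$, $\mu\ge 0$, $n\in\mathbb{N}$ and $x\in[0,\infty)$. Then $$\Delta_1:=T_n(t-x;x)=\frac{2\alpha x^2}{n},\qquad \Delta_2:=T_n((t-x)^2;x)=\frac{1}{n^2}x\left(4x^3\alpha^2+4\alpha x+n\right)+\frac{2\mu x}{n}\frac{e_\mu(-nx)}{e_\mu(nx)},$$ where $T_n$ acts on the variable $t$.
   Context: For $\mu>-\tfrac12$ define $\gamma_\mu(2k)=\dfrac{2^{2k}k!\,\Gamma(k+\mu+1/2)}{\Gamma(\mu+1/2)}$ and $\gamma_\mu(2k+1)=\dfrac{2^{2k+1}k!\,\Gamma(k+\mu+3/2)}{\Gamma(\mu+1/2)}$, $k\ge0$; $e_\mu(x)=\sum_{k\ge0} x^k/\gamma_\mu(k)$; $\theta_k=0$ if $k$ is even and $\theta_k=1$ if $k$ is odd. Let $h_k^\mu(\xi,\alpha)=\gamma_\mu(k)\sum_{j=0}^{\lfloor k/2\rfloor}\dfrac{\alpha^j\xi^{k-2j}}{j!\,\gamma_\mu(k-2j)}$. For $\alpha\ge0,\mu\ge0$, $n\in\mathbb{N}$ and $x\in[0,\infty)$ define $$T_n(f;x)=\frac{1}{e^{\alpha x^2}e_\mu(nx)}\sum_{k=0}^\infty \frac{h_k^\mu(n,\alpha)}{\gamma_\mu(k)}x^k f\!\left(\frac{k+2\mu\theta_k}{n}\right).$$ *)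

(* Defs.v *)
From Stdlib Require Import Reals Arith Factorial.
From Coquelicot Require Import Coquelicot.
Open Scope R_scope.

(* Pochhammer symbol (a)_k = a (a+1) ... (a+k-1) = Gamma(a+k)/Gamma(a). *)
Fixpoint poch (a : R) (k : nat) : R :=
  match k with
  | O => 1
  | S k' => poch a k' * (a + INR k')
  end.

(* gamma_mu(2k)   = 2^(2k)   k! Gamma(k+mu+1/2)/Gamma(mu+1/2)
   gamma_mu(2k+1) = 2^(2k+1) k! Gamma(k+mu+3/2)/Gamma(mu+1/2) *)
Definition gamma_mu (mu : R) (m : nat) : R :=
  if Nat.even m
  then 2 ^ m * INR (fact (Nat.div2 m)) * poch (mu + /2) (Nat.div2 m)
  else 2 ^ m * INR (fact (Nat.div2 m)) * poch (mu + /2) (S (Nat.div2 m)).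

Definition e_mu (mu x : R) : R := Series (fun k => x ^ k / gamma_mu mu k).

Definition theta (k : nat) : R := if Nat.odd k then 1 else 0.

Definition h_mu (mu : R) (k : nat) (xi alpha : R) : R :=
  gamma_mu mu k *
  sum_f_R0 (fun j => alpha ^ j * xi ^ (k - 2 * j) / (INR (fact j) * gamma_mu mu (k - 2 * j)))
           (Nat.div2 k).

Definition T_term (alpha mu : R) (n : nat) (f : R -> R) (x : R) (k : nat) : R :=
  h_mu mu k (INR n) alpha / gamma_mu mu k * x ^ k * f ((INR k + 2 * mu * theta k) / INR n).

Definition T_op (alpha mu : R) (n : nat) (f : R -> R) (x : R) : R :=
  Series (T_term alpha mu n f x) / (exp (alpha * x ^ 2) * e_mu mu (INR n * x)).

(* Main.v *)
Require Import Defs.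
From Stdlib Require Import Reals Arith Lia Lra.
From Coquelicot Require Import Coquelicot.
Open Scope R_scope.

Definition lam (mu : R) (k : nat) : R := INR k + 2 * mu * theta k.

Lemma even_double k : Nat.even (2*k) = true.
Proof. rewrite Nat.even_mul; reflexivity. Qed.
Lemma odd_double k : Nat.odd (2*k) = false.
Proof. unfold Nat.odd; rewrite even_double; reflexivity. Qed.
Lemma even_sdouble k : Nat.even (S (2*k)) = false.
Proof. rewrite Nat.even_succ; apply odd_double. Qed.
Lemma odd_sdouble k : Nat.odd (S (2*k)) = true.
Proof. rewrite Nat.odd_succ; apply even_double. Qed.

Lemma theta_S m : theta (S m) = 1 - theta m.
Proof. unfold theta; rewrite Nat.odd_succ, <- Nat.negb_odd; destruct (Nat.odd m); simpl; ring. Qed.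

Lemma gamma_0 mu : gamma_mu mu 0 = 1.
Proof. unfold gamma_mu; simpl; ring. Qed.

Lemma gamma_S mu m : gamma_mu mu (S m) = gamma_mu mu m * lam mu (S m).
Proof.
  destruct (Nat.Even_or_Odd m) as [[k ->]|[k ->]].
  - unfold gamma_mu, lam, theta. rewrite even_sdouble, even_double, odd_sdouble,
      Nat.div2_double, Nat.div2_succ_double.
    cbn [poch pow]. rewrite S_INR, mult_INR. simpl (INR 2). field.
  - replace (S (2*k+1)) with (2 * S k)%nat by lia.
    replace (2*k+1)%nat with (S (2*k)) by lia.
    unfold gamma_mu, lam, theta. rewrite even_sdouble, even_double, odd_double,
      Nat.div2_double, Nat.div2_succ_double.
    replace (2 * S k)%nat with (S (S (2*k))) by lia.
    cbn [poch pow fact]. rewrite mult_INR, !S_INR, mult_INR. simpl (INR 2). ring.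
Qed.

Lemma lam_S mu m : lam mu (S m) = lam mu m + 1 + 2*mu - 4*mu*theta m.
Proof. unfold lam; rewrite theta_S, S_INR; ring. Qed.

Lemma theta_01 m : theta m = 0 \/ theta m = 1.
Proof. unfold theta; destruct (Nat.odd m); auto. Qed.

Lemma lam_ge mu m : 0 <= mu -> INR m <= lam mu m.
Proof. intros; unfold lam; destruct (theta_01 m) as [-> | ->]; nra. Qed.

Lemma gamma_pos mu m : 0 <= mu -> 0 < gamma_mu mu m.
Proof.
  intros Hmu; induction m.
  - rewrite gamma_0; lra.
  - rewrite gamma_S. apply Rmult_lt_0_compat; auto.
    apply Rlt_le_trans with (INR (S m)); [apply lt_0_INR; lia| apply lam_ge; auto].
Qed.

Lemma gamma_ge_fact mu m : 0 <= mu -> INR (fact m) <= gamma_mu mu m.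
Proof.
  intros Hmu; induction m.
  - rewrite gamma_0; simpl; lra.
  - rewrite gamma_S. cbn [fact]. rewrite mult_INR.
    rewrite Rmult_comm. apply Rmult_le_compat; auto using pos_INR, lam_ge.
Qed.

Lemma theta_pow m y : theta m * y ^ m = (y ^ m - (- y) ^ m) / 2.
Proof.
  induction m.
  - unfold theta; simpl; field.
  - rewrite theta_S. cbn [pow].
    replace ((1 - theta m) * (y * y ^ m)) with (y * y^m - y * (theta m * y ^ m)) by ring.
    rewrite IHm. field.
Qed.

Lemma isR_plus (a b : nat -> R) (la lb : R) : is_series a la -> is_series b lb ->
  is_series (fun n => a n + b n) (la + lb).
Proof. intros; exact (is_series_plus _ _ _ _ H H0). Qed.
Lemma isR_scal (c : R) (a : nat -> R) (la : R) : is_series a la -> is_series (fun n => c * a n) (c * la).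
Proof. intros; exact (is_series_scal _ _ _ H). Qed.
Lemma isR_ext (a b : nat -> R) (la lb : R) : (forall n, a n = b n) -> la = lb -> is_series a la -> is_series b lb.
Proof. intros H -> H1; exact (is_series_ext _ _ _ H H1). Qed.

Lemma is_exp z : is_series (fun n => z ^ n / INR (fact n)) (exp z).
Proof.
  generalize (is_exp_Reals z); intro H. apply is_pseries_R in H.
  eapply isR_ext; [|reflexivity|exact H]. intros; simpl; unfold Rdiv; ring.
Qed.

Lemma is_zero : is_series (fun _ => 0) 0.
Proof.
  eapply isR_ext; [| |exact (isR_scal 0 _ _ (is_exp 0))]; intros; simpl; ring.
Qed.

Lemma shift_series (a : nat -> R) (l : R) : a 0%nat = 0 -> is_series (fun k => a (S k)) l -> is_series a l.
Proof.
  intros H0 H. apply is_series_decr_1. rewrite H0.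
  eapply is_series_ext; [intros; reflexivity|].
  match goal with |- is_series _ ?L => replace L with l; auto end.
  unfold plus, opp; simpl; ring.
Qed.

Lemma ex_b mu y : 0 <= mu -> ex_series (fun m => y ^ m / gamma_mu mu m).
Proof.
  intros Hmu. apply (@ex_series_le R_AbsRing R_CompleteNormedModule _ (fun m => Rabs y ^ m / INR (fact m))).
  - intros m. change (norm (y ^ m / gamma_mu mu m)) with (Rabs (y ^ m / gamma_mu mu m)).
    unfold Rdiv. rewrite Rabs_mult, Rabs_inv, <- RPow_abs.
    rewrite (Rabs_pos_eq (gamma_mu mu m)) by (apply Rlt_le, gamma_pos; auto).
    apply Rmult_le_compat_l; [apply pow_le, Rabs_pos|].
    apply Rinv_le_contravar; [apply INR_fact_lt_0| apply gamma_ge_fact; auto].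
  - exists (exp (Rabs y)); apply is_exp.
Qed.

Lemma is_b mu y : 0 <= mu -> is_series (fun m => y ^ m / gamma_mu mu m) (e_mu mu y).
Proof. intros; apply Series_correct, ex_b; auto. Qed.

Lemma lam_pos mu k : 0 <= mu -> 0 < lam mu (S k).
Proof. intros; apply Rlt_le_trans with (INR (S k)); [apply lt_0_INR; lia| apply lam_ge; auto]. Qed.

Lemma lam_0 mu : lam mu 0 = 0.
Proof. unfold lam, theta; simpl; ring. Qed.

Lemma is_b1 mu y : 0 <= mu ->
  is_series (fun m => lam mu m * (y ^ m / gamma_mu mu m)) (y * e_mu mu y).
Proof.
  intros Hmu. apply shift_series; [rewrite lam_0; ring|].
  eapply isR_ext; [|reflexivity|exact (isR_scal y _ _ (is_b mu y Hmu))].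
  intros k. simpl. rewrite gamma_S.
  assert (0 < gamma_mu mu k) by (apply gamma_pos; auto).
  assert (0 < lam mu (S k)) by (apply lam_pos; auto).
  field; lra.
Qed.

Lemma is_b2 mu y : 0 <= mu ->
  is_series (fun m => lam mu m ^ 2 * (y ^ m / gamma_mu mu m))
    (y * (y * e_mu mu y + e_mu mu y + 2 * mu * e_mu mu (- y))).
Proof.
  intros Hmu. apply shift_series; [rewrite lam_0; ring|].
  eapply isR_ext; [|reflexivity|exact (isR_scal y _ _ (isR_plus _ _ _ _
     (isR_plus _ _ _ _ (is_b1 mu y Hmu) (is_b mu y Hmu)) (isR_scal (2*mu) _ _ (is_b mu (-y) Hmu))))].
  intros k. cbv beta. rewrite gamma_S.
  assert (0 < gamma_mu mu k) by (apply gamma_pos; auto).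
  assert (0 < lam mu (S k)) by (apply lam_pos; auto).
  symmetry. transitivity (y * (lam mu (S k) * y ^ k / gamma_mu mu k)); [cbn [pow]; field; lra|].
  rewrite lam_S.
  replace ((lam mu k + 1 + 2 * mu - 4 * mu * theta k) * y ^ k) with
    ((lam mu k + 1 + 2 * mu) * y ^ k - 4 * mu * (theta k * y ^ k)) by ring.
  rewrite theta_pow. field; lra.
Qed.

Definition a0 (z : R) (i : nat) : R :=
  if Nat.even i then z ^ (Nat.div2 i) / INR (fact (Nat.div2 i)) else 0.

Lemma even_series (g : nat -> R) l : (forall n, g (2*n+1)%nat = 0) ->
  is_series (fun n => g (2*n)%nat) l -> is_series g l.
Proof.
  intros Ho He.
  assert (H : is_pseries g 1 (l + 1 * 0)).
  { apply is_pseries_odd_even; apply is_pseries_R.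
    - eapply isR_ext; [|reflexivity|exact He]. intros; cbv beta. replace (1^2) with 1 by ring. rewrite pow1; ring.
    - eapply isR_ext; [|reflexivity|exact is_zero]. intros; cbv beta. rewrite Ho; ring. }
  apply is_pseries_R in H. eapply isR_ext; [| |exact H]; [intros; cbv beta; rewrite pow1; ring | ring].
Qed.

Lemma a0_odd z n : a0 z (2*n+1) = 0.
Proof. unfold a0. rewrite Nat.add_1_r, even_sdouble. reflexivity. Qed.
Lemma a0_even z n : a0 z (2*n) = z ^ n / INR (fact n).
Proof. unfold a0. rewrite even_double, Nat.div2_double. reflexivity. Qed.

Lemma is_e1 z : is_series (fun n => INR n * (z ^ n / INR (fact n))) (z * exp z).
Proof.
  apply shift_series; [simpl; ring|].
  eapply isR_ext; [|reflexivity|exact (isR_scal z _ _ (is_exp z))].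
  intros k. cbn [fact pow]. rewrite mult_INR.
  assert (INR (fact k) <> 0) by apply INR_fact_neq_0.
  assert (0 < INR (S k)) by (apply lt_0_INR; lia).
  field; lra.
Qed.

Lemma is_e2 z : is_series (fun n => INR n ^ 2 * (z ^ n / INR (fact n))) (z * (z * exp z + exp z)).
Proof.
  apply shift_series; [simpl; ring|].
  eapply isR_ext; [|reflexivity|exact (isR_scal z _ _ (isR_plus _ _ _ _ (is_e1 z) (is_exp z)))].
  intros k. cbn [fact pow]. rewrite mult_INR.
  assert (INR (fact k) <> 0) by apply INR_fact_neq_0.
  assert (0 < INR (S k)) by (apply lt_0_INR; lia).
  rewrite S_INR in *. field; lra.
Qed.

Lemma is_a0 z : is_series (a0 z) (exp z).
Proof.
  apply even_series; [apply a0_odd|].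
  eapply isR_ext; [|reflexivity|exact (is_exp z)]. intros; rewrite a0_even; reflexivity.
Qed.

Lemma is_a1 z : is_series (fun i => INR i * a0 z i) (2 * (z * exp z)).
Proof.
  apply even_series; [intros; rewrite a0_odd; ring|].
  eapply isR_ext; [|reflexivity|exact (isR_scal 2 _ _ (is_e1 z))].
  intros; rewrite a0_even, mult_INR; simpl; ring.
Qed.

Lemma is_a2 z : is_series (fun i => INR i ^ 2 * a0 z i) (4 * (z * (z * exp z + exp z))).
Proof.
  apply even_series; [intros; rewrite a0_odd; ring|].
  eapply isR_ext; [|reflexivity|exact (isR_scal 4 _ _ (is_e2 z))].
  intros; rewrite a0_even, mult_INR; simpl; ring.
Qed.

Definition conv (a b : nat -> R) (k : nat) : R :=
  sum_f_R0 (fun i => a i * b (k - i)%nat) k.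

Lemma sum_even (G : nat -> R) k :
  sum_f_R0 (fun i => if Nat.even i then G i else 0) k =
  sum_f_R0 (fun j => G (2*j)%nat) (Nat.div2 k).
Proof.
  assert (H : forall N, sum_f_R0 (fun i => if Nat.even i then G i else 0) (2*N) =
                         sum_f_R0 (fun j => G (2*j)%nat) N /\
                       sum_f_R0 (fun i => if Nat.even i then G i else 0) (S (2*N)) =
                         sum_f_R0 (fun j => G (2*j)%nat) N).
  { induction N as [|N [IH1 IH2]].
    - simpl. split; ring.
    - replace (2 * S N)%nat with (S (S (2*N))) by lia.
      assert (E1 : sum_f_R0 (fun i => if Nat.even i then G i else 0) (S (S (2*N))) =
                   sum_f_R0 (fun j => G (2*j)%nat) (S N)).
      { rewrite tech5, IH2, tech5. rewrite Nat.even_succ, Nat.odd_succ, even_double.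
        replace (2 * S N)%nat with (S (S (2*N))) by lia. reflexivity. }
      split; auto. rewrite tech5, E1.
      replace (Nat.even (S (S (S (2*N))))) with false.
      + ring.
      + rewrite Nat.even_succ, Nat.odd_succ, Nat.even_succ, odd_double. reflexivity. }
  destruct (Nat.Even_or_Odd k) as [[N ->]|[N ->]].
  - rewrite Nat.div2_double; apply H.
  - rewrite Nat.add_1_r, Nat.div2_succ_double; apply H.
Qed.

Lemma conv_h alpha mu n x k : 0 <= mu ->
  h_mu mu k (INR n) alpha / gamma_mu mu k * x ^ k =
  conv (a0 (alpha * x ^ 2)) (fun m => (INR n * x) ^ m / gamma_mu mu m) k.
Proof.
  intros Hmu. unfold conv.
  transitivity (sum_f_R0 (fun i => if Nat.even i then
      (alpha * x^2) ^ (Nat.div2 i) / INR (fact (Nat.div2 i)) *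
      ((INR n * x) ^ (k - i) / gamma_mu mu (k - i)) else 0) k).
  2: { apply sum_eq; intros i Hi. unfold a0. destruct (Nat.even i); ring. }
  rewrite sum_even. unfold h_mu.
  assert (0 < gamma_mu mu k) by (apply gamma_pos; auto).
  transitivity (x ^ k * sum_f_R0 (fun j => alpha ^ j * INR n ^ (k - 2 * j) /
       (INR (fact j) * gamma_mu mu (k - 2 * j))) (Nat.div2 k)); [field; lra|].
  rewrite scal_sum. apply sum_eq; intros j Hj. rewrite Nat.div2_double.
  assert (Hjk : (2 * j <= k)%nat).
  { pose proof (Nat.div2_odd k). destruct (Nat.odd k); simpl in *; lia. }
  assert (Hk : x ^ k = (x^2)^j * x^(k-2*j)).
  { rewrite <- pow_mult, <- pow_add. f_equal. lia. }
  rewrite Hk, !Rpow_mult_distr.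
  assert (INR (fact j) <> 0) by apply INR_fact_neq_0.
  assert (0 < gamma_mu mu (k - 2*j)) by (apply gamma_pos; auto).
  field; lra.
Qed.

Lemma lam_split z mu i k : (i <= k)%nat ->
  a0 z i = 0 \/ lam mu k = INR i + lam mu (k - i).
Proof.
  intros Hik. unfold a0. destruct (Nat.even i) eqn:He; [right|left; reflexivity].
  assert (Ht : theta k = theta (k - i)).
  { unfold theta. replace k with (i + (k - i))%nat at 1 by lia.
    rewrite Nat.odd_add. unfold Nat.odd at 1. rewrite He. reflexivity. }
  unfold lam. rewrite Ht, minus_INR by lia. ring.
Qed.

Lemma conv1 z mu (b : nat -> R) k :
  conv (a0 z) b k * lam mu k =
  conv (fun i => INR i * a0 z i) b k + conv (a0 z) (fun m => lam mu m * b m) k.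
Proof.
  unfold conv. rewrite Rmult_comm, scal_sum, <- plus_sum.
  apply sum_eq; intros i Hi.
  destruct (lam_split z mu i k Hi) as [-> | ->]; ring.
Qed.

Lemma conv2 z mu (b : nat -> R) k :
  conv (a0 z) b k * lam mu k ^ 2 =
  conv (fun i => INR i ^ 2 * a0 z i) b k
  + 2 * conv (fun i => INR i * a0 z i) (fun m => lam mu m * b m) k
  + conv (a0 z) (fun m => lam mu m ^ 2 * b m) k.
Proof.
  unfold conv. rewrite Rmult_comm, !scal_sum, <- !plus_sum.
  apply sum_eq; intros i Hi.
  destruct (lam_split z mu i k Hi) as [-> | ->]; ring.
Qed.

Theorem lemma4 (alpha mu : R) (n : nat) (x : R) :
  0 <= alpha -> 0 <= mu -> (1 <= n)%nat -> 0 <= x ->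
  ex_series (T_term alpha mu n (fun t => t - x) x) /\
  T_op alpha mu n (fun t => t - x) x = 2 * alpha * x ^ 2 / INR n /\
  ex_series (T_term alpha mu n (fun t => (t - x) ^ 2) x) /\
  T_op alpha mu n (fun t => (t - x) ^ 2) x =
    / (INR n) ^ 2 * x * (4 * x ^ 3 * alpha ^ 2 + 4 * alpha * x + INR n)
    + 2 * mu * x / INR n * (e_mu mu (- (INR n * x)) / e_mu mu (INR n * x)).
Proof.
  intros Ha Hmu Hn Hx.
  set (z := alpha * x ^ 2).
  set (y := INR n * x).
  set (b := fun m => y ^ m / gamma_mu mu m).
  assert (Hz : 0 <= z) by (unfold z; nra).
  assert (HN : 0 < INR n) by (apply lt_0_INR; lia).
  assert (Hy : 0 <= y) by (unfold y; nra).
  assert (Hb : forall m, 0 <= b m).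
  { intros; unfold b. apply Rdiv_le_0_compat; [apply pow_le; auto| apply gamma_pos; auto]. }
  assert (Hlam : forall m, 0 <= lam mu m).
  { intros; apply Rle_trans with (INR m); [apply pos_INR| apply lam_ge; auto]. }
  assert (Ha0 : forall i, 0 <= a0 z i).
  { intros; unfold a0; destruct (Nat.even i); [|lra].
    apply Rdiv_le_0_compat; [apply pow_le; auto| apply INR_fact_lt_0]. }
  assert (Ha1 : forall i, 0 <= INR i * a0 z i) by (intros; apply Rmult_le_pos; auto using pos_INR).
  assert (Ha2 : forall i, 0 <= INR i ^ 2 * a0 z i) by (intros; apply Rmult_le_pos; auto using pow2_ge_0).
  assert (Hb1 : forall m, 0 <= lam mu m * b m) by (intros; apply Rmult_le_pos; auto).
  assert (Hb2 : forall m, 0 <= lam mu m ^ 2 * b m) by (intros; apply Rmult_le_pos; auto using pow2_ge_0).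
  assert (B0 : is_series b (e_mu mu y)) by exact (is_b mu y Hmu).
  assert (B1 : is_series (fun m => lam mu m * b m) (y * e_mu mu y)) by exact (is_b1 mu y Hmu).
  assert (B2 : is_series (fun m => lam mu m ^ 2 * b m)
    (y * (y * e_mu mu y + e_mu mu y + 2 * mu * e_mu mu (- y)))) by exact (is_b2 mu y Hmu).
  pose proof (is_a0 z) as A0. pose proof (is_a1 z) as A1. pose proof (is_a2 z) as A2.
  pose proof (is_series_mult_pos _ _ _ _ A0 B0 Ha0 Hb) as C00.
  pose proof (is_series_mult_pos _ _ _ _ A1 B0 Ha1 Hb) as C10.
  pose proof (is_series_mult_pos _ _ _ _ A0 B1 Ha0 Hb1) as C01.
  pose proof (is_series_mult_pos _ _ _ _ A2 B0 Ha2 Hb) as C20.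
  pose proof (is_series_mult_pos _ _ _ _ A1 B1 Ha1 Hb1) as C11.
  pose proof (is_series_mult_pos _ _ _ _ A0 B2 Ha0 Hb2) as C02.
  assert (HT : forall f k, T_term alpha mu n f x k = conv (a0 z) b k * f (lam mu k / INR n)).
  { intros f k. unfold T_term. rewrite conv_h by auto. reflexivity. }
  assert (HE : 0 < e_mu mu y).
  { assert (ex_series b) by (exists (e_mu mu y); auto).
    rewrite <- (is_series_unique _ _ B0), Series_incr_1 by auto.
    assert (0 <= Series (fun k => b (S k))).
    { rewrite <- (is_series_unique _ _ is_zero). apply Series_le.
      - intros; split; [lra| auto].
      - apply ex_series_incr_1 in H; exact H. }
    unfold b at 1; simpl; rewrite gamma_0. lra. }
  assert (Hexp : 0 < exp z) by apply exp_pos.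
  assert (S1 : is_series (T_term alpha mu n (fun t => t - x) x)
     (/ INR n * (2 * (z * exp z) * e_mu mu y + exp z * (y * e_mu mu y)) + (- x) * (exp z * e_mu mu y))).
  { eapply isR_ext; [| reflexivity | exact (isR_plus _ _ _ _ (isR_scal (/ INR n) _ _ (isR_plus _ _ _ _ C10 C01)) (isR_scal (-x) _ _ C00))].
    intros k. cbv beta. rewrite HT.
    change (sum_f_R0 (fun i => INR i * a0 z i * b (k - i)%nat) k) with (conv (fun i => INR i * a0 z i) b k).
    change (sum_f_R0 (fun i => a0 z i * (lam mu (k - i)%nat * b (k - i)%nat)) k) with (conv (a0 z) (fun m => lam mu m * b m) k).
    change (sum_f_R0 (fun i => a0 z i * b (k - i)%nat) k) with (conv (a0 z) b k).
    rewrite <- conv1. field. lra. }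
  assert (S2 : is_series (T_term alpha mu n (fun t => (t - x) ^ 2) x)
     (/ INR n ^ 2 * (4 * (z * (z * exp z + exp z)) * e_mu mu y
                     + 2 * (2 * (z * exp z) * (y * e_mu mu y))
                     + exp z * (y * (y * e_mu mu y + e_mu mu y + 2 * mu * e_mu mu (- y))))
      + (- 2 * x / INR n) * (2 * (z * exp z) * e_mu mu y + exp z * (y * e_mu mu y))
      + x ^ 2 * (exp z * e_mu mu y))).
  { eapply isR_ext; [| reflexivity | exact (isR_plus _ _ _ _ (isR_plus _ _ _ _
        (isR_scal (/ INR n ^ 2) _ _ (isR_plus _ _ _ _ (isR_plus _ _ _ _ C20 (isR_scal 2 _ _ C11)) C02))
        (isR_scal (- 2 * x / INR n) _ _ (isR_plus _ _ _ _ C10 C01)))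
        (isR_scal (x ^ 2) _ _ C00))].
    intros k. cbv beta. rewrite HT.
    change (sum_f_R0 (fun i => INR i * a0 z i * b (k - i)%nat) k) with (conv (fun i => INR i * a0 z i) b k).
    change (sum_f_R0 (fun i => a0 z i * (lam mu (k - i)%nat * b (k - i)%nat)) k) with (conv (a0 z) (fun m => lam mu m * b m) k).
    change (sum_f_R0 (fun i => a0 z i * b (k - i)%nat) k) with (conv (a0 z) b k).
    change (sum_f_R0 (fun i => INR i ^ 2 * a0 z i * b (k - i)%nat) k) with (conv (fun i => INR i ^ 2 * a0 z i) b k).
    change (sum_f_R0 (fun i => INR i * a0 z i * (lam mu (k - i)%nat * b (k - i)%nat)) k) with
      (conv (fun i => INR i * a0 z i) (fun m => lam mu m * b m) k).
    change (sum_f_R0 (fun i => a0 z i * (lam mu (k - i)%nat ^ 2 * b (k - i)%nat)) k) with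
      (conv (a0 z) (fun m => lam mu m ^ 2 * b m) k).
    rewrite <- (conv2 z mu b k), <- (conv1 z mu b k). field. lra. }
  split; [eexists; exact S1|]. split.
  { unfold T_op. rewrite (is_series_unique _ _ S1). fold z y. unfold z, y in *. field. split; lra. }
  split; [eexists; exact S2|].
  { unfold T_op. rewrite (is_series_unique _ _ S2). fold z y. unfold z, y in *. field. split; lra. }
Qed.
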